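(* Let $\Phi$ be a Markov Logic Network with largest formula arity $d$, let $n,m$ be positive integers, and let $\omega$ be an interpretation on $[n+m]$. Then $$w(\omega) \leq w(\omega \downarrow [n]) \times w(\omega \downarrow [\bar{n}]) \times \prod_{k \in [d]} (w^{max}_{k})^{ \binom{n+m}{k} - \binom{n}{k} - \binom{m}{k}}$$ and $$w(\omega) \geq w(\omega \downarrow [n]) \times w(\omega \downarrow [\bar{n}]) \times \prod_{k \in [d]} (w^{min}_{k})^{ \binom{n+m}{k} - \binom{n}{k} - \binom{m}{k}},$$ where $[\bar n]=\{n+1,\dots,n+m\}$.
   Context: Fix a finite function-free relational first-order signature $\mathcal{R}$. For a positive integer $N$ write $[N]=\{1,\dots,N\}$. For a finite set $D$ of constants, a ground atom over $D$ is $R(a_1,\dots,a_r)$ with $R\in\mathcal{R}$ of arity $r$ and $a_1,\dots,a_r\in D$. An interpretation on $D$ is a map assigning true/false to every ground atom over $D$; $\Omega^{(N)}$ is the set of interpretations on $[N]$. For an interpretation $\omega$ on $D$ and $I\subseteq D$, $\omega\downarrow I$ is the interpretation on $I$ obtained by restricting $\omega$ to the ground atoms all of whose arguments lie in $I$. A Markov Logic Network (MLN) $\Phi$ is a finite set of pairs $(\phi_i,a_i)$, where $\phi_i$ is a function-free, quantifier-free first-order formula over $\mathcal{R}$ and $a_i\in\mathbb{R}$. The arity of $\phi_i$ is the number of distinct variables in it; $\Phi_k$ is the set of pairs whose formula has arity $k$. Convention: a formula with $k$ variables is grounded only by substituting $k$ pairwise distinct constants for its variables; for an interpretation $\omega$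 on a finite set $D$, $N(\phi,\omega)$ is the number of injective assignments of the variables of $\phi$ to elements of $D$ under which $\phi$ is true in $\omega$. The weight of an interpretation $\omega$ on any finite domain is $w(\omega)=\exp\bigl(\sum_{(\phi_i,a_i)\in\Phi}a_iN(\phi_i,\omega)\bigr)$, and its $k$-weight is $w_k(\omega)=\exp\bigl(\sum_{(\phi_i,a_i)\in\Phi_k}a_iN(\phi_i,\omega)\bigr)$. $w_k^{max}$ and $w_k^{min}$ denote the maximum and minimum of $w_k(\omega')$ over all interpretations $\omega'$ on a $k$-element domain (e.g. on $[k]$). Binomial coefficients $\binom{a}{k}$ with $k>a$ are $0$. *)

(* Defs.v *)
From HB Require Import structures.
From mathcomp Require Import all_boot all_order all_algebra.
From mathcomp Require Import reals sequences exp.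
Set Implicit Arguments. Unset Strict Implicit. Unset Printing Implicit Defensive.
Import Order.TTheory GRing.Theory Num.Theory.
Local Open Scope ring_scope.

Section MLN.
Variable Rel : finType.
Variable ar : Rel -> nat.

Inductive formula :=
| FAtom (r : Rel) of (ar r).-tuple nat
| FEq of nat & nat
| FTrue
| FFalse
| FNot of formula
| FAnd of formula & formula
| FOr of formula & formula.

Fixpoint fvars (f : formula) : seq nat :=
  match f with
  | FAtom _ t => val t
  | FEq x y => [:: x; y]
  | FTrue | FFalse => [::]
  | FNot g => fvars g
  | FAnd g h | FOr g h => fvars g ++ fvars h
  end.

Definition vars (f : formula) : seq nat := undup (fvars f).
Definition arity (f : formula) : nat := size (vars f).

Definition gatom (D : finType) := {r : Rel & (ar r).-tuple D}.
Definition interp (D : finType) := {ffun gatom D -> bool}.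

Fixpoint holds (D : finType) (om : interp D) (s : nat -> option D)
    (f : formula) : bool :=
  match f with
  | FAtom r t =>
      match (insub (pmap id (map s (val t))) : option ((ar r).-tuple D)) with
      | Some u => om (@Tagged Rel r (fun r => (ar r).-tuple D) u)
      | None => false
      end
  | FEq x y => s x == s y
  | FTrue => true
  | FFalse => false
  | FNot g => ~~ holds om s g
  | FAnd g h => holds om s g && holds om s h
  | FOr g h => holds om s g || holds om s h
  end.

(* the assignment of the variables of f given by g : 'I_(arity f) -> D,
   the i-th distinct variable of f being sent to g i *)
Definition assign (D : finType) (f : formula) (g : {ffun 'I_(arity f) -> D})
    (x : nat) : option D :=
  omap g (insub (index x (vars f))).

Definition Ncount (D : finType) (om : interp D) (f : formula) : nat :=
  #|[set g : {ffun 'I_(arity f) -> D} |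
      injectiveb (g : 'I_(arity f) -> D) && holds om (assign g) f]|.

Variable R : realType.

(* an MLN is a finite list of weighted formulas *)
Definition weight (D : finType) (Phi : seq (formula * R)) (om : interp D) : R :=
  expR (\sum_(p <- Phi) p.2 * (Ncount om p.1)%:R).

Definition kweight (D : finType) (Phi : seq (formula * R)) (k : nat)
    (om : interp D) : R :=
  expR (\sum_(p <- Phi | arity p.1 == k) p.2 * (Ncount om p.1)%:R).

Definition false_interp (D : finType) : interp D := [ffun => false].

(* w_k^max and w_k^min: max / min of the k-weight over interpretations on a
   k-element domain ('I_k).  The start value is itself one of the values. *)
Definition wkmax (Phi : seq (formula * R)) (k : nat) : R :=
  \big[Num.max/kweight Phi k (false_interp 'I_k)]_(om : interp 'I_k)
     kweight Phi k om.
Definition wkmin (Phi : seq (formula * R)) (k : nat) : R :=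
  \big[Num.min/kweight Phi k (false_interp 'I_k)]_(om : interp 'I_k)
     kweight Phi k om.

Definition max_arity (Phi : seq (formula * R)) : nat :=
  \max_(p <- Phi) arity p.1.

Definition restrict (D : finType) (P : pred D) (om : interp D)
    : interp {x : D | P x} :=
  [ffun a : gatom {x : D | P x} =>
     om (@Tagged Rel (tag a) (fun r => (ar r).-tuple D)
                 (map_tuple val (tagged a)))].

End MLN.

(* Main.v *)
Require Import Defs.
From HB Require Import structures.
From mathcomp Require Import all_boot all_order all_algebra.
From mathcomp Require Import reals sequences exp.
From mathcomp Require Import zify.
Import Order.TTheory GRing.Theory Num.Theory.

Set Implicit Arguments. Unset Strict Implicit. Unset Printing Implicit Defensive.

Section Pull.
Variable Rel : finType.
Variable ar : Rel -> nat.

Definition pull (D1 D2 : finType) (h : D1 -> D2) (om : interp ar D2) : interp ar D1 :=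
  [ffun a : gatom ar D1 =>
     om (@Tagged Rel (tag a) (fun r => (ar r).-tuple D2) (map_tuple h (tagged a)))].

Lemma holds_ext (D : finType) (om : interp ar D) s s' f :
  s =1 s' -> holds om s f = holds om s' f.
Proof.
move=> ss'; elim: f => //=.
- by move=> r t; rewrite (eq_map ss').
- by move=> x y; rewrite !ss'.
- by move=> g ->.
- by move=> g -> h ->.
- by move=> g -> h ->.
Qed.

Lemma pmap_omap (T U : Type) (h : T -> U) (l : seq (option T)) :
  pmap id (map (omap h) l) = map h (pmap id l).
Proof. by elim: l => [|[x|] l IH] //=; rewrite IH. Qed.

Lemma holds_pull (D1 D2 : finType) (h : D1 -> D2) (om : interp ar D2) s f :
  injective h ->
  holds (pull h om) s f = holds om (fun x => omap h (s x)) f.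
Proof.
move=> hinj; elim: f => //=.
- move=> r t.
  have -> : map (fun x => omap h (s x)) t = map (omap h) (map s t) by rewrite -map_comp.
  rewrite pmap_omap.
  case: insubP => [u Hsz Hu | Hsz]; case: insubP => [u' Hsz' Hu' | Hsz'] //=.
  + rewrite ffunE /=; congr (om (Tagged _ _)); apply: val_inj => /=.
    by rewrite Hu' Hu.
  + by rewrite size_map Hsz in Hsz'.
  + by rewrite size_map in Hsz'; rewrite Hsz' in Hsz.
- move=> x y; case: (s x) => [a|]; case: (s y) => [b|] //=.
  apply/eqP/eqP => [[->]//|[E]]; by rewrite (hinj _ _ E).
- by move=> g ->.
- by move=> g -> h' ->.
- by move=> g -> h' ->.
Qed.


Lemma assign_comp (D1 D2 : finType) (h : D1 -> D2) (f : formula ar)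
  (g : {ffun 'I_(arity f) -> D1}) x :
  assign [ffun i => h (g i)] x = omap h (assign g x).
Proof. by rewrite /assign; case: insub => //= i; rewrite ffunE. Qed.

Lemma Ncount_pull (D1 D2 : finType) (h : D1 -> D2) (om : interp ar D2) f :
  injective h ->
  Ncount (pull h om) f =
  #|[set g : {ffun 'I_(arity f) -> D2} |
      injectiveb g && holds om (assign g) f && [forall i, g i \in codom h]]|.
Proof.
move=> hinj.
pose F (g : {ffun 'I_(arity f) -> D1}) : {ffun 'I_(arity f) -> D2} :=
  [ffun i => h (g i)].
have Finj : injective F.
  move=> g1 g2 E; apply/ffunP => i; apply: hinj.
  by move/ffunP: E => /(_ i); rewrite !ffunE.
rewrite /Ncount -(card_imset _ Finj); apply: eq_card => g'; rewrite inE.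
apply/imsetP/idP.
- case=> g; rewrite inE => /andP[gi gh] ->.
  rewrite (holds_ext _ _ (assign_comp h g)) -holds_pull // gh andbT.
  apply/andP; split.
    apply/injectiveP => i j; rewrite !ffunE => /hinj.
    exact: (injectiveP _ gi).
  by apply/forallP => i; rewrite ffunE codom_f.
- case/andP => /andP[gi gh] /forallP gc.
  have: forall i, exists x, h x = g' i.
    by move=> i; case/codomP: (gc i) => x ->; exists x.
  case/fin_all_exists => u Hu.
  have Eg : g' = F (finfun u) by apply/ffunP => i; rewrite !ffunE Hu.
  exists (finfun u) => //; rewrite inE; rewrite Eg in gi gh.
  rewrite (holds_ext _ _ (assign_comp h _)) -holds_pull // in gh.
  rewrite gh andbT; apply/injectiveP => i j E.
  apply: (injectiveP _ gi); by rewrite /F !ffunE -!(ffunE u) E.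
Qed.

End Pull.

Section Split.
Variable Rel : finType.
Variable ar : Rel -> nat.
Variable D : finType.

Definition hS (x0 : D) (k : nat) (S : {set D}) (i : 'I_k) : D := nth x0 (enum S) i.
Definition mixed (L R : {set D}) (k : nat) (S : {set D}) :=
  (#|S| == k) && ~~ (S \subset L) && ~~ (S \subset R).
Definition img k (g : {ffun 'I_k -> D}) : {set D} := [set g i | i : 'I_k].

Lemma hS_inj x0 k (S : {set D}) : #|S| = k -> injective (@hS x0 k S).
Proof.
move=> HS i j; rewrite /hS => /eqP; rewrite nth_uniq ?enum_uniq -?cardE ?HS //.
by move/eqP/val_inj.
Qed.

Lemma hS_codom x0 k (S : {set D}) : #|S| = k -> codom (@hS x0 k S) =i S.
Proof.
move=> HS x; apply/codomP/idP => [[i ->]|xS].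
  by rewrite /hS -mem_enum mem_nth // -cardE HS.
have Hi : (index x (enum S) < k)%N by rewrite -HS cardE index_mem mem_enum.
by exists (Ordinal Hi); rewrite /hS /= nth_index // mem_enum.
Qed.

Lemma img_sub k (g : {ffun 'I_k -> D}) (T : {set D}) :
  (img g \subset T) = [forall i, g i \in T].
Proof.
apply/subsetP/forallP => H.
  by move=> i; apply: H; apply/imsetP; exists i.
by move=> x /imsetP [i _ ->].
Qed.

Lemma card_img k (g : {ffun 'I_k -> D}) : injectiveb g -> #|img g| = k.
Proof.
move/injectiveP => gi; rewrite /img card_imset ?card_ord //.
Qed.

Lemma Ncount_split (om : interp ar D) (f : formula ar) (L R : {set D}) (x0 : D) :
  (0 < arity f)%N -> [disjoint L & R] ->
  Ncount om f =
   (#|[set g : {ffun 'I_(arity f) -> D} |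
      injectiveb g && holds om (assign g) f && [forall i, g i \in L]]|
  + #|[set g : {ffun 'I_(arity f) -> D} |
      injectiveb g && holds om (assign g) f && [forall i, g i \in R]]|
  + \sum_(S | mixed L R (arity f) S) Ncount (pull (@hS x0 (arity f) S) om) f)%N.
Proof.
move=> kpos dLR.
rewrite {1}/Ncount -sum1_card.
rewrite (bigID (fun g : {ffun 'I_(arity f) -> D} => [forall i, g i \in L])) /=.
rewrite [X in (_ + X)%N](bigID (fun g : {ffun 'I_(arity f) -> D} => [forall i, g i \in R])) /=.
rewrite addnA; congr (_ + _ + _)%N.
- rewrite sum1dep_card; apply: eq_card => g; by rewrite !inE.
- rewrite sum1dep_card; apply: eq_card => g; rewrite !inE.
  case: ([forall i, g i \in R]) / forallP => [HR|]; last by rewrite !andbF.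
  rewrite andbT; have -> : ~~ [forall i, g i \in L].
    apply/negP => /forallP HL.
    by move: (disjointFr dLR (HL (Ordinal kpos))); rewrite HR.
  by rewrite andbT.
- rewrite (partition_big (@img (arity f)) (mixed L R (arity f))).
    apply: eq_bigr => S /andP[/andP[/eqP HS nL] nR].
    rewrite sum1dep_card Ncount_pull; last exact: hS_inj.
    apply: eq_card => g; rewrite !inE.
    case gi: (injectiveb g) => //=; case: (holds _ _ _) => //=.
    rewrite (eq_forallb (fun i => hS_codom x0 HS (g i))) -!img_sub.
    case E: (img g == S).
      by move/eqP: E => E; rewrite E nL nR subxx.
    rewrite andbF; apply/esym/negbTE; apply: contraFN E => sub.
    by rewrite eqEcard sub card_img // HS leqnn.
  move=> g; rewrite inE => /andP[/andP[/andP[gi _]]].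
  by rewrite -!img_sub /mixed card_img // eqxx => -> ->.
Qed.

End Split.

Lemma card_L n m : #|[set i : 'I_(n + m) | (i < n)%N]| = n.
Proof.
have -> : [set i : 'I_(n + m) | (i < n)%N] = [set lshift m j | j : 'I_n].
  apply/setP => i; rewrite inE; apply/idP/imsetP => [Hi|[j _ ->]].
    by exists (Ordinal Hi) => //; apply: val_inj.
  by rewrite /= ltn_ord.
by rewrite card_imset ?card_ord //; apply: lshift_inj.
Qed.

Lemma card_R n m : #|[set i : 'I_(n + m) | (n <= i)%N]| = m.
Proof.
have -> : [set i : 'I_(n + m) | (n <= i)%N] = [set rshift n j | j : 'I_m].
  apply/setP => i; rewrite inE; apply/idP/imsetP => [Hi|[j _ ->]].
    have Hj : (i - n < m)%N by rewrite ltn_subLR // ltn_ord.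
    by exists (Ordinal Hj) => //; apply: val_inj; rewrite /= subnKC.
  by rewrite /= leq_addr.
by rewrite card_imset ?card_ord //; apply: rshift_inj.
Qed.

Lemma card_mixed n m k : (0 < k)%N ->
  (#|[set S : {set 'I_(n + m)} |
      mixed [set i : 'I_(n + m) | (i < n)%N] [set i : 'I_(n + m) | (n <= i)%N] k S]|
   + 'C(n, k) + 'C(m, k))%N = 'C(n + m, k).
Proof.
move=> kpos.
set L := [set i : 'I_(n + m) | (i < n)%N].
set R := [set i : 'I_(n + m) | (n <= i)%N].
have -> : 'C(n + m, k) = #|[set S : {set 'I_(n + m)} | #|S| == k]|.
  by rewrite card_draws card_ord.
have -> : 'C(n, k) = #|[set S : {set 'I_(n + m)} | S \subset L & #|S| == k]|.
  by rewrite cards_draws card_L.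
have -> : 'C(m, k) = #|[set S : {set 'I_(n + m)} | S \subset R & #|S| == k]|.
  by rewrite cards_draws card_R.
rewrite -[RHS]sum1dep_card.
rewrite [RHS](bigID (fun S : {set 'I_(n + m)} => S \subset L)) /=.
rewrite [X in (_ = _ + X)%N](bigID (fun S : {set 'I_(n + m)} => S \subset R)) /=.
rewrite !sum1dep_card.
have E1 : #|[set S : {set 'I_(n + m)} | mixed L R k S]| =
  #|[set x : {set 'I_(n + m)} | (#|x| == k) && ~~ (x \subset L) & ~~ (x \subset R)]|.
  by apply: eq_card => S; rewrite !inE /mixed.
have E2 : #|[set S : {set 'I_(n + m)} | S \subset L & #|S| == k]| = #|[set x : {set 'I_(n + m)} | #|x| == k & x \subset L]|.
  by apply: eq_card => S; rewrite !inE andbC.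
have E3 : #|[set S : {set 'I_(n + m)} | S \subset R & #|S| == k]| =
  #|[set x : {set 'I_(n + m)} | (#|x| == k) && ~~ (x \subset L) & x \subset R]|.
  apply: eq_card => S; rewrite !inE.
  case sR: (S \subset R); last by rewrite andbF.
  rewrite andbT; case: (#|S| =P k) => //= HS.
  apply/esym/negP => sL.
  have : S \subset L :&: R by rewrite subsetI sL sR.
  have -> : L :&: R = set0.
    by apply/setP => i; rewrite !inE; case: leqP.
  rewrite subset0 => /eqP S0; move: HS; rewrite S0 cards0 => k0.
  by rewrite -k0 in kpos.
rewrite E1 E2 E3.
by rewrite [RHS]addnA [RHS]addnC [RHS]addnA.
Qed.

Unset Implicit Arguments. Set Strict Implicit.
Local Open Scope ring_scope.

Lemma bigmax_ge_seq (R : realDomainType) (I : eqType) (r : seq I) (F : I -> R) x0 j :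
  j \in r -> F j <= \big[Num.max/x0]_(i <- r) F i.
Proof.
elim: r => // a r IH; rewrite in_cons big_cons => /orP[/eqP->|jr].
  by rewrite le_max lexx.
by rewrite le_max IH ?orbT.
Qed.

Lemma bigmin_le_seq (R : realDomainType) (I : eqType) (r : seq I) (F : I -> R) x0 j :
  j \in r -> \big[Num.min/x0]_(i <- r) F i <= F j.
Proof.
elim: r => // a r IH; rewrite in_cons big_cons => /orP[/eqP->|jr].
  by rewrite ge_min lexx.
by rewrite ge_min IH ?orbT.
Qed.

Section Main.
Variables (Rel : finType) (ar : Rel -> nat) (R : realType).

Lemma kw_le_wkmax (Phi : seq (formula ar * R)) k (om : interp ar 'I_k) :
  kweight Phi k om <= wkmax Phi k.
Proof. by apply: bigmax_ge_seq; rewrite mem_index_enum. Qed.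

Lemma wkmin_le_kw (Phi : seq (formula ar * R)) k (om : interp ar 'I_k) :
  wkmin Phi k <= kweight Phi k om.
Proof. by apply: bigmin_le_seq; rewrite mem_index_enum. Qed.

Lemma wkmin_ge0 (Phi : seq (formula ar * R)) k : 0 <= wkmin Phi k.
Proof.
apply: (big_ind (fun x : R => 0 <= x)); first exact: expR_ge0.
  by move=> x y x0 y0; rewrite le_min x0 y0.
by move=> i _; exact: expR_ge0.
Qed.

Lemma codom_val (D : finType) (P : pred D) (x : D) :
  (x \in codom (val : {x : D | P x} -> D)) = P x.
Proof.
apply/codomP/idP => [[y ->]|Px]; first exact: (valP y).
by exists (exist _ x Px).
Qed.

Lemma Ncount_restrict (D : finType) (P : pred D) (om : interp ar D) f :
  Ncount (restrict P om) f =
  #|[set g : {ffun 'I_(arity f) -> D} |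
      injectiveb g && holds om (assign g) f && [forall i, g i \in [set x | P x]]]|.
Proof.
have -> : restrict P om = pull val om by apply/ffunP => a; rewrite !ffunE.
rewrite Ncount_pull; last exact: val_inj.
apply: eq_card => g; rewrite !inE; congr (_ && _); apply: eq_forallb => i.
by rewrite codom_val inE.
Qed.

Lemma prod_const_set (I : finType) (P : pred I) (c : R) :
  \prod_(i | P i) c = c ^+ #|[set i | P i]|.
Proof. by rewrite -prodr_const; apply: eq_bigl => i; rewrite inE. Qed.

End Main.

Lemma eq_big_all (I R' : Type) (idx : R') (op : R' -> R' -> R') (r : seq I)
  (P : pred I) (F G : I -> R') :
  all P r -> (forall x, P x -> F x = G x) ->
  \big[op/idx]_(x <- r) F x = \big[op/idx]_(x <- r) G x.
Proof.
elim: r => [|a r IH] /=; first by rewrite !big_nil.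
by move=> /andP[Pa Pr] FG; rewrite !big_cons FG // IH.
Qed.

Lemma all_and (I : Type) (P Q : pred I) (r : seq I) :
  all P r -> all Q r -> all (fun x => P x && Q x) r.
Proof. by elim: r => //= a r IH /andP[-> ?] /andP[-> ?] /=; rewrite IH. Qed.

Lemma all_le_max (I : Type) (F : I -> nat) (r : seq I) :
  all (fun p => (F p <= \max_(q <- r) F q)%N) r.
Proof.
elim: r => //= a r IH; rewrite big_cons leq_maxl /=.
by apply: sub_all IH => p /leq_trans; apply; rewrite leq_maxr.
Qed.

Theorem proposition1 (Rel : finType) (ar : Rel -> nat) (R : realType)
    (Phi : seq (formula ar * R)) (n m : nat) (om : interp ar 'I_(n + m)) :
  (0 < n)%N -> (0 < m)%N ->
  all (fun p => (0 < arity p.1)%N) Phi ->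
  let d := max_arity Phi in
  let e := fun k : nat =>
    ('C(n + m, k))%:Z - ('C(n, k))%:Z - ('C(m, k))%:Z in
  weight Phi om <=
    weight Phi (restrict (fun i : 'I_(n + m) => (i < n)%N) om)
    * weight Phi (restrict (fun i : 'I_(n + m) => (n <= i)%N) om)
    * \prod_(1 <= k < d.+1) (wkmax Phi k) ^ (e k)
  /\
  weight Phi om >=
    weight Phi (restrict (fun i : 'I_(n + m) => (i < n)%N) om)
    * weight Phi (restrict (fun i : 'I_(n + m) => (n <= i)%N) om)
    * \prod_(1 <= k < d.+1) (wkmin Phi k) ^ (e k).
Proof.
move=> npos mpos Har d e.
set L := [set i : 'I_(n + m) | (i < n)%N].
set Rs := [set i : 'I_(n + m) | (n <= i)%N].
have dLR : [disjoint L & Rs].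
  by apply/pred0P => i /=; rewrite !inE; case: ltnP.
have x0 : 'I_(n + m) by exists 0%N; rewrite ltn_addr.
set wL := weight Phi (restrict (fun i : 'I_(n + m) => (i < n)%N) om).
set wR := weight Phi (restrict (fun i : 'I_(n + m) => (n <= i)%N) om).
pose Y k (p : formula ar * R) := p.2 * \sum_(S | mixed L Rs k S)
   (Ncount (pull (@hS _ x0 k S) om) p.1)%:R.
have Hsplit : \sum_(p <- Phi) p.2 * (Ncount om p.1)%:R =
   \sum_(p <- Phi) p.2 * (Ncount (restrict (fun i : 'I_(n + m) => (i < n)%N) om) p.1)%:R
 + \sum_(p <- Phi) p.2 * (Ncount (restrict (fun i : 'I_(n + m) => (n <= i)%N) om) p.1)%:R
 + \sum_(k <- index_iota 1 d.+1) \sum_(S | mixed L Rs k S)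
     \sum_(p <- Phi | arity p.1 == k) p.2 * (Ncount (pull (@hS _ x0 k S) om) p.1)%:R.
  transitivity (\sum_(p <- Phi)
     (p.2 * (Ncount (restrict (fun i : 'I_(n + m) => (i < n)%N) om) p.1)%:R
    + p.2 * (Ncount (restrict (fun i : 'I_(n + m) => (n <= i)%N) om) p.1)%:R
    + Y (arity p.1) p)).
    apply: (@eq_big_all _ _ _ _ Phi (fun p : formula ar * R => (0 < arity p.1)%N)) => // p ppos.
    rewrite (@Ncount_split _ _ _ om p.1 L Rs x0 ppos dLR) !natrD natr_sum.
    by rewrite !Ncount_restrict /Y -!mulrDr.
  rewrite !big_split /=; congr (_ + _).
  transitivity (\sum_(p <- Phi) \sum_(k <- index_iota 1 d.+1)
                  (if arity p.1 == k then Y k p else 0)).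
    apply: (@eq_big_all _ _ _ _ Phi (fun p : formula ar * R => (0 < arity p.1)%N && (arity p.1 <= d)%N)) => [|p /andP[ppos pd]].
      exact: (all_and _ _ _ _ Har (all_le_max _ (fun p : formula ar * R => arity p.1) Phi)).
    have kin : arity p.1 \in index_iota 1 d.+1.
      by rewrite mem_index_iota ppos ltnS.
    rewrite (big_rem (arity p.1) kin) /= eqxx big1_seq ?addr0 //.
    move=> k /andP[_ kin']; case: eqP kin' => // <-.
    by rewrite mem_rem_uniqF ?iota_uniq.
  rewrite exchange_big /=; apply: eq_bigr => k _.
  rewrite -big_mkcond /= [RHS]exchange_big /=; apply: eq_bigr => p _.
  by rewrite /Y mulr_sumr.
have Hw : weight Phi om = wL * wR *
   \prod_(1 <= k < d.+1) \prod_(S | mixed L Rs k S) kweight Phi k (pull (@hS _ x0 k S) om).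
  rewrite /weight Hsplit !expRD; congr (_ * _).
  rewrite expR_sum; apply: eq_bigr => k _.
  by rewrite expR_sum; apply: eq_bigr => S _; rewrite /kweight.
have He k : (0 < k)%N -> e k = (#|[set S : {set 'I_(n + m)} | mixed L Rs k S]|)%:Z.
  move=> kpos; rewrite /e -(card_mixed n m kpos) !PoszD.
  by rewrite addrAC !addrK.
have wLR : 0 <= wL * wR by rewrite mulr_ge0 ?expR_ge0.
split.
- rewrite Hw; apply: ler_wpM2l => //.
  rewrite big_nat_cond [X in _ <= X]big_nat_cond; apply: ler_prod => k /andP[/andP[k1 _] _].
  rewrite prodr_ge0 /=; last by move=> S _; exact: expR_ge0.
  rewrite He // -exprnP -prod_const_set; apply: ler_prod => S _.
  by rewrite expR_ge0 kw_le_wkmax.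
- rewrite Hw; apply: ler_wpM2l => //.
  rewrite big_nat_cond [X in _ <= X]big_nat_cond; apply: ler_prod => k /andP[/andP[k1 _] _].
  rewrite He // -exprnP exprn_ge0 ?wkmin_ge0 //= -prod_const_set; apply: ler_prod => S _.
  by rewrite wkmin_ge0 wkmin_le_kw.
Qed.
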